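(* Let $X$ be a complete hyperbolic surface of finite area and $p$ a cusp. There is a constant $C>0$ such that for every integer $n\ge1$ and every $T>0$, $$A_n^p(T)\le \frac{Ce^T}{n^2}.$$
   Context: $N_p(1)$ is the embedded horoball neighborhood of $p$ whose boundary horocycle has length $1$. Lifting to the upper half-plane with $p$ at $\infty$, $N_p(1)$ lifts to $\{\mathrm{Im}\,z\ge h\}$ and the stabilizer of $\infty$ is generated by $z\mapsto z+1$ (suitably normalized). An $n$-excursion in $N_p(1)$ is a geodesic arc contained in $N_p(1)$ with endpoints on $\partial N_p(1)$ whose lifted endpoints $z_1,z_2$ satisfy $n\le|\mathrm{Re}\,z_1-\mathrm{Re}\,z_2|<n+1$. $A_n^p(T)$ is the total number of $n$-excursions in $N_p(1)$ occurring as subarcs of closed geodesics of length $\le T$ (i.e. the number of pairs $(\gamma,\eta)$ with $\gamma$ a closed geodesic of length $\le T$ and $\eta$ an $n$-excursion of $\gamma$ in $N_p(1)$). *)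

(* Defs.v *)
(* A complete finite-area hyperbolic surface X is modelled (as usual) as H/G
   for a torsion-free discrete subgroup G of SL(2,R) of finite covolume, with
   the cusp p normalized at infinity so that its stabilizer is generated by
   z |-> z + 1 (up to -I).  N_p(1) lifts to B = {Im z >= 1}. *)
From HB Require Import structures.
From mathcomp Require Import all_boot all_order all_algebra.
From mathcomp Require Import all_classical all_reals all_analysis.
Import Order.TTheory GRing.Theory Num.Theory.
Import numFieldNormedType.Exports.
Local Open Scope classical_set_scope.
Local Open Scope ring_scope.

Set Implicit Arguments.
Unset Strict Implicit.
Unset Printing Implicit Defensive.

(* 2x2 real matrices [[a, b], [c, d]] *)
Record mat2 (R : Type) := M2 { ma : R; mb : R; mc : R; md : R }.

Section HypDefs.
Variable R : realType.

Definition mmul (g h : mat2 R) : mat2 R :=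
  M2 (ma g * ma h + mb g * mc h) (ma g * mb h + mb g * md h)
     (mc g * ma h + md g * mc h) (mc g * mb h + md g * md h).
Definition mid : mat2 R := M2 1 0 0 1.
Definition mdet (g : mat2 R) : R := ma g * md g - mb g * mc g.
Definition minv (g : mat2 R) : mat2 R := M2 (md g) (- mb g) (- mc g) (ma g).
Definition mtr (g : mat2 R) : R := ma g + md g.

(* Upper half-plane: points z = x + i y encoded as (x, y) with y > 0. *)
Definition uhp : set (R * R) := [set z | 0 < z.2].

(* Moebius action z |-> (a z + b) / (c z + d) of a determinant-1 matrix. *)
Definition mob (g : mat2 R) (z : R * R) : R * R :=
  let den := (mc g * z.1 + md g) ^+ 2 + (mc g * z.2) ^+ 2 in
  (((ma g * z.1 + mb g) * (mc g * z.1 + md g) + ma g * mc g * z.2 ^+ 2) / den,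
   z.2 / den).

Definition sl2_subgroup (G : set (mat2 R)) : Prop :=
  [/\ G mid, (forall g h, G g -> G h -> G (mmul g h)),
      (forall g, G g -> G (minv g)) & (forall g, G g -> mdet g = 1)].

Definition discrete_group (G : set (mat2 R)) : Prop :=
  forall M : R, finite_set [set g | G g /\
     [/\ `|ma g| <= M, `|mb g| <= M, `|mc g| <= M & `|md g| <= M]].

(* torsion-free (as a group of isometries): no elliptic elements *)
Definition no_elliptic (G : set (mat2 R)) : Prop :=
  forall g, G g -> 2 <= `|mtr g|.

Definition finite_area (G : set (mat2 R)) : Prop :=
  exists F : set (R * R),
    [/\ measurable F, F `<=` uhp,
        (forall z, uhp z -> exists g w, [/\ G g, F w & mob g w = z])
      & (\int[((@lebesgue_measure R) \x (@lebesgue_measure R))%E]_(z in F)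
            ((z.2 ^- 2)%:E) < +oo)%E].

Definition cusp_at_infinity (G : set (mat2 R)) : Prop :=
  G (M2 1 1 0 1) /\
  forall g, G g -> mc g = 0 ->
    exists k : int, g = M2 1 k%:~R 0 1 \/ g = M2 (-1) k%:~R 0 (-1).

Definition hyperbolic (g : mat2 R) : Prop := 2 < `|mtr g|.

(* translation length 2 arccosh(|tr g|/2) of a hyperbolic element *)
Definition translen (g : mat2 R) : R :=
  2 * ln ((`|mtr g| + Num.sqrt (mtr g ^+ 2 - 4)) / 2).

Definition geod (c r : R) : set (R * R) :=
  [set z | 0 < z.2 /\ (z.1 - c) ^+ 2 + z.2 ^+ 2 = r ^+ 2].

(* a geodesic L of H is the lift of a closed geodesic iff it is the axis
   (invariant geodesic) of some hyperbolic element of G; the length of that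
   closed geodesic is the minimal translation length along L *)
Definition axis_of (G : set (mat2 R)) (L : set (R * R)) : set (mat2 R) :=
  [set g | [/\ G g, hyperbolic g & mob g @` L = L]].

Definition closed_geod_length (G : set (mat2 R)) (L : set (R * R)) : R :=
  inf (translen @` axis_of G L).

Definition horoball : set (R * R) := [set z | 1 <= z.2].

Definition n_excursion_lift (G : set (mat2 R)) (T : R) (n : nat)
    (cr : R * R) : Prop :=
  let L := geod cr.1 cr.2 in
  [/\ 0 < cr.2, axis_of G L !=set0, closed_geod_length G L <= T &
      exists z1 z2, [/\ L z1, L z2, z1.2 = 1, z2.2 = 1 &
        n%:R <= `|z1.1 - z2.1| < n.+1%:R]].

Definition same_excursion (G : set (mat2 R)) (cr1 cr2 : R * R) : Prop :=
  exists g, G g /\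
    mob g @` (geod cr1.1 cr1.2 `&` horoball) = geod cr2.1 cr2.2 `&` horoball.

End HypDefs.

(* Main.v *)
Require Import Defs.
From HB Require Import structures.
From mathcomp Require Import all_boot all_order all_algebra.
From mathcomp Require Import all_classical all_reals all_analysis.
From mathcomp Require Import ring lra zify.
Import Order.TTheory GRing.Theory Num.Theory.
Local Open Scope classical_set_scope.
Local Open Scope ring_scope.

Section Aux.
Variable R : realType.
Implicit Types g h : mat2 R.

Lemma M2E g : g = M2 (ma g) (mb g) (mc g) (md g).
Proof. by case: g. Qed.

Definition tp (m : int) : mat2 R := M2 1 m%:~R 0 1.
Definition Tm : mat2 R := M2 1 1 0 1.

Lemma tp_add m k : mmul (tp m) (tp k) = tp (m + k).
Proof. rewrite /tp /mmul /= intrD; congr M2; ring. Qed.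

Lemma minv_tp m : minv (tp m) = tp (- m).
Proof. rewrite /tp /minv /= intrN; congr M2; ring. Qed.

Lemma tp1 : tp 1 = Tm.
Proof. by rewrite /tp /Tm. Qed.

Lemma tp_in (G : set (mat2 R)) : sl2_subgroup G -> G Tm -> forall m, G (tp m).
Proof.
case=> G1 GM GV _ GT.
have Hn : forall n : nat, G (tp n%:Z).
  elim=> [|n IH]; first by have -> : tp 0%:Z = mid R by rewrite /tp /mid.
  have -> : tp n.+1%:Z = mmul (tp n%:Z) (tp 1) by rewrite tp_add; congr tp; lia.
  by apply: GM => //; rewrite tp1.
case=> n; first exact: Hn.
have -> : Negz n = - (n.+1%:Z) by rewrite NegzE.
by rewrite -minv_tp; apply: GV.
Qed.

Lemma mob_tp m z : mob (tp m) z = (z.1 + m%:~R, z.2).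
Proof. rewrite /mob /tp /=; have -> : (0 * z.1 + 1) ^+ 2 + (0 * z.2) ^+ 2 = 1 :> R by ring.
by rewrite !divr1; congr pair; ring. Qed.

Lemma geod_tp m c r :
  mob (tp m) @` (geod c r `&` @horoball R) = geod (c + m%:~R) r `&` @horoball R.
Proof.
apply/seteqP; split.
  move=> _ [z [[z2 zE] zh] <-]; rewrite mob_tp; split; [split|] => //=.
  by rewrite -zE; congr (_ + _); congr (_ ^+ 2); ring.
move=> w [[w2 wE] wh]; exists (w.1 - m%:~R, w.2).
  split; [split|] => //=; rewrite -wE; congr (_ + _); congr (_ ^+ 2); ring.
by rewrite mob_tp /=; case: w {w2 wE wh} => x y /=; congr pair; ring.
Qed.



Definition stp g := mmul (mmul g Tm) (minv g).

Lemma sq_le (x y : R) : 0 <= y -> x ^+ 2 <= y ^+ 2 -> `|x| <= y.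
Proof. move=> y0 h; rewrite -(ger0_norm y0); rewrite -ler_sqr ?normr_ge0 //; by rewrite !real_normK ?num_real. Qed.

Lemma shimizu (G : set (mat2 R)) : sl2_subgroup G -> discrete_group G -> G Tm ->
  forall h, G h -> mc h != 0 -> 1/4 <= `|mc h|.
Proof.
move=> sG dG GT h Gh ch0; rewrite leNgt; apply/negP => chs.
have [G1 GM GV Gdet] := sG.
pose m := - Num.floor (ma h / mc h).
pose h0 := mmul (tp m) h.
have Gh0 : G h0 by apply: (GM) => //; exact: tp_in.
have c0E : mc h0 = mc h by rewrite /h0 /tp /mmul /=; ring.
have a0E : ma h0 = mc h * (ma h / mc h - (Num.floor (ma h / mc h))%:~R).
  rewrite /h0 /tp /mmul /= /m intrN; field; exact: ch0.
have a0b : `|ma h0| <= 2.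
  have f0 := floor_le (ma h / mc h); have f1 := floorD1_gt (ma h / mc h).
  rewrite intrD in f1.
  rewrite a0E normrM; apply: (@le_trans _ _ (`|mc h| * 1)).
    apply: ler_wpM2l => //; rewrite ler_norml; apply/andP; split; lra.
  by rewrite mulr1; lra.
pose hs := fix hs k := if k is k'.+1 then stp (hs k') else h0.
have inv : forall k, [/\ G (hs k), `|ma (hs k)| <= 2, mc (hs k) != 0 & `|mc (hs k)| < 1/4].
  elim=> [|k [Gk ak ck ck4]].
    by change (hs 0%N) with h0; rewrite c0E; split.
  change (hs k.+1) with (stp (hs k)).
  have dk := Gdet _ Gk; move: dk; rewrite /mdet => dk.
  have Gs : G (stp (hs k)).
    rewrite /stp; apply: (GM); first by apply: (GM).
    by apply: (GV).
  move: ak ck ck4; rewrite /stp /mmul /minv /Tm /=.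
  set a := ma (hs k); set b := mb (hs k); set c := mc (hs k); set d := md (hs k).
  move: dk; rewrite -/a -/b -/c -/d => dk ak ck ck4.
  rewrite ler_norml in ak; rewrite ltr_norml in ck4; case/andP: ak => ak1 ak2; case/andP: ck4 => c1 c2.
  have cE : (c * 1 + d * 0) * d + (c * 1 + d * 1) * - c = - (c * c) by ring.
  split.
  - exact Gs.
  - rewrite ler_norml; apply/andP; split; nra.
  - by rewrite cE oppr_eq0 mulf_neq0.
  - rewrite cE ltr_norml; apply/andP; split; nra.
have step : forall k, [/\ ma (hs k.+1) = 1 - ma (hs k) * mc (hs k),
     mb (hs k.+1) = ma (hs k) ^+ 2, mc (hs k.+1) = - (mc (hs k)) ^+ 2 &
     md (hs k.+1) = 1 + ma (hs k) * mc (hs k)].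
  move=> k; have [Gk _ _ _] := inv k; have := Gdet _ Gk.
  change (hs k.+1) with (stp (hs k)); rewrite /mdet /stp /mmul /minv /Tm /= => dk.
  split; nra.
have dec : forall k, `|mc (hs k.+1)| < `|mc (hs k)|.
  move=> k; have [_ _ ck ck4] := inv k; have [_ _ -> _] := step k.
  rewrite normrN normrX; have n0 : 0 < `|mc (hs k)| by rewrite normr_gt0.
  have c1 : `|mc (hs k)| < 1 by lra.
  rewrite expr2; nra.
have decl : forall d k, `|mc (hs (d.+1 + k)%N)| < `|mc (hs k)|.
  elim=> [|d IH] k; first exact: dec.
  by apply: lt_trans (IH k); rewrite addSn; apply: dec.
pose B := [set g | G g /\ [/\ `|ma g| <= 4, `|mb g| <= 4, `|mc g| <= 4 & `|md g| <= 4]].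
pose f := fun k => hs k.+1.
have fB : forall k, B (f k).
  move=> k; have [Gk ak ck ck4] := inv k; have [Gk1 _ _ _] := inv k.+1.
  have [e1 e2 e3 e4] := step k; split => //.
  rewrite /f e1 e2 e3 e4.
  move: ak ck4; rewrite ler_norml ltr_norml => /andP[? ?] /andP[? ?].
  split; rewrite ler_norml; apply/andP; split; nra.
have finj : {in f @^-1` B &, injective f}.
  move=> i j _ _ eij; apply/eqP; case: (ltngtP i j) => // hij.
  - have := decl (j - i.+1)%N i.+1; rewrite (_ : ((j - i.+1).+1 + i.+1 = j.+1)%N); last by lia.
    by rewrite -/(f j) -eij /f ltxx.
  - have := decl (i - j.+1)%N j.+1; rewrite (_ : ((i - j.+1).+1 + j.+1 = i.+1)%N); last by lia.
    by rewrite -/(f i) eij /f ltxx.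
have := finite_preimage finj (dG 4).
have -> : f @^-1` B = setT by apply/seteqP; split => // k _; exact: fB.
exact: infinite_nat.
Qed.



Definition Hf g (c r x Y : R) : R :=
  (ma g * x + mb g) ^+ 2 + ma g ^+ 2 * Y
  - 2 * c * ((ma g * x + mb g) * (mc g * x + md g) + ma g * mc g * Y)
  + (c ^+ 2 - r ^+ 2) * ((mc g * x + md g) ^+ 2 + mc g ^+ 2 * Y).

Lemma Hmob g c r x y : mdet g = 1 -> 0 < y -> geod c r (mob g (x, y)) ->
  Hf g c r x (y ^+ 2) = 0.
Proof.
rewrite /mdet /geod /mob /Hf /=.
set a := ma g; set b := mb g; set cc := mc g; set d := md g => dt y0 [_].
set den := (cc * x + d) ^+ 2 + (cc * y) ^+ 2.
have den0 : den != 0.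
  rewrite /den; case: (eqVneq cc 0) => [c0|c0].
    rewrite c0 !mul0r add0r expr0n /= addr0 sqrf_eq0; apply/eqP => d0.
    by move: dt; rewrite c0 d0 mulr0 mulr0 subr0 => /eqP; rewrite eq_sym oner_eq0.
  apply/eqP => e; have : (cc * y) ^+ 2 = 0.
    apply/eqP; rewrite eq_le sqr_ge0 andbT -e lerDr; exact: sqr_ge0.
  by move/eqP; rewrite sqrf_eq0 mulf_eq0 (negbTE c0) /= gt_eqF.
move=> hw.
have id : den ^+ 2 * ((((a * x + b) * (cc * x + d) + a * cc * y ^+ 2) / den - c) ^+ 2
            + (y / den) ^+ 2 - r ^+ 2) =
   den * ((a * x + b) ^+ 2 + a ^+ 2 * y ^+ 2
  - 2 * c * ((a * x + b) * (cc * x + d) + a * cc * y ^+ 2)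
  + (c ^+ 2 - r ^+ 2) * ((cc * x + d) ^+ 2 + cc ^+ 2 * y ^+ 2))
   - y ^+ 2 * ((a * d - b * cc) ^+ 2 - 1).
  rewrite /den; field; exact: den0.
move: id; rewrite hw subrr mulr0 dt expr1n subrr mulr0 subr0 => /esym /eqP.
by rewrite mulf_eq0 (negbTE den0) /= => /eqP.
Qed.

Lemma axisK g c r : mdet g = 1 -> 2 < `|mtr g| -> 0 < r ->
  (forall z, geod c r z -> geod c r (mob g z)) ->
  [/\ mc g != 0, ma g - md g = 2 * c * mc g &
      mtr g ^+ 2 - 4 = 4 * mc g ^+ 2 * r ^+ 2].
Proof.
move=> dt tr2 r0 inv.
have L1 : geod c r (c, r) by split => //=; rewrite subrr; ring.
have H1 : Hf g c r c (r ^+ 2) = 0 := @Hmob g c r c r dt r0 (inv _ L1).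
pose s := Num.sqrt 3 / 2 * r.
have s2 : s ^+ 2 = 3 / 4 * r ^+ 2.
  have h3 : (0 : R) <= 3 by lra.
  rewrite /s !exprMn (sqr_sqrtr h3); by field.
have s0 : 0 < s by rewrite /s mulr_gt0 // divr_gt0 // sqrtr_gt0; lra.
have L2 : geod c r (c + r / 2, s) by split => //=; rewrite s2; by field.
have H2 : Hf g c r (c + r / 2) (3 / 4 * r ^+ 2) = 0.
  by rewrite -s2; exact: (@Hmob g c r _ s dt s0 (inv _ L2)).
pose p := c - r; pose q := c + r.
have Fp : ((ma g * p + mb g) - p * (mc g * p + md g)) *
          ((ma g * p + mb g) - q * (mc g * p + md g)) = 0.
  have e : ((ma g * p + mb g) - p * (mc g * p + md g)) *
          ((ma g * p + mb g) - q * (mc g * p + md g)) =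
     3 * Hf g c r c (r ^+ 2) - 2 * Hf g c r (c + r / 2) (3 / 4 * r ^+ 2).
    rewrite /Hf /p /q; by field.
  by rewrite e H1 H2; ring.
have Fq : ((ma g * q + mb g) - p * (mc g * q + md g)) *
          ((ma g * q + mb g) - q * (mc g * q + md g)) = 0.
  have e : ((ma g * q + mb g) - p * (mc g * q + md g)) *
          ((ma g * q + mb g) - q * (mc g * q + md g)) =
     - Hf g c r c (r ^+ 2) + 2 * Hf g c r (c + r / 2) (3 / 4 * r ^+ 2).
    rewrite /Hf /p /q; by field.
  by rewrite e H1 H2; ring.
have t2 : 4 < mtr g ^+ 2.
  rewrite -real_normK ?num_real //; nra.
have pq : p - q != 0 by rewrite /p /q; apply/eqP => e; lra.
have canc : forall u, u * (p - q) = 0 -> u = 0.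
  by move=> u /eqP; rewrite mulf_eq0 (negbTE pq) orbF => /eqP.
move: dt t2 Fp Fq; rewrite /mdet /mtr.
set a := ma g; set b := mb g; set cc := mc g; set d := md g => dt t2.
move=> /eqP; rewrite mulf_eq0 => /orP[] /eqP Fp /eqP; rewrite mulf_eq0 => /orP[] /eqP Fq.
- (* p fixed, q -> p *)
  have ea : a - p * cc = 0 by apply: canc; rewrite -[RHS](subrr 0) -{1}Fp -Fq; ring.
  have eb : b = p * d by nra.
  exfalso; move: dt; rewrite eb (_ : a = p * cc); last by lra.
  by move=> dt; move: dt; rewrite (_ : p * cc * d - p * d * cc = 0); [lra | ring].
- (* both fixed *)
  have ead : a - d - cc * (p + q) = 0 by apply: canc; rewrite -[RHS](subrr 0) -{1}Fp -Fq; ring.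
  have ad : a - d = 2 * c * cc by move: ead; rewrite /p /q => ead; lra.
  have eb : b = - cc * ((c - r) * (c + r)).
    have : b = p * (cc * p + d) - a * p by lra.
    move=> ->; rewrite (_ : a = d + 2 * c * cc); last by lra.
    rewrite /p; ring.
  have key : (a + d) ^+ 2 - 4 = 4 * cc ^+ 2 * r ^+ 2.
    have hh : (a + d) ^+ 2 - 4 = (a - d) ^+ 2 + 4 * (a * d - b * cc) + 4 * b * cc - 4 by ring.
    rewrite hh dt ad eb; ring.
  split => //.
  apply/eqP => c0; move: key ad; rewrite c0 => key ad.
  have a0 : a = d by lra.
  move: t2 dt; rewrite eb c0 a0 => t2 dt; nra.
- (* swap *)
  have e : (a + d) * (p - q) = 0 by rewrite -[RHS](subrr 0) -{1}Fp -Fq; ring.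
  have := canc _ e => tr0; exfalso; move: t2; rewrite tr0; lra.
- have ea : a - q * cc = 0 by apply: canc; rewrite -[RHS](subrr 0) -{1}Fp -Fq; ring.
  have eb : b = q * d by nra.
  exfalso; move: dt; rewrite eb (_ : a = q * cc); last by lra.
  by move=> dt; move: dt; rewrite (_ : q * cc * d - q * d * cc = 0); [lra | ring].
Qed.


Lemma exc (c r : R) (n : nat) : (1 <= n)%N ->
  (exists z1 z2 : R * R, [/\ geod c r z1, geod c r z2, z1.2 = 1, z2.2 = 1 &
        n%:R <= `|z1.1 - z2.1| < n.+1%:R]) ->
  n%:R ^+ 2 + 4 <= 4 * r ^+ 2 < n.+1%:R ^+ 2 + 4.
Proof.
move=> n1 [[x1 y1] [[x2 y2] [[_ e1] [_ e2] /= h1 h2 /andP[l u]]]].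
move: e1 e2; rewrite /= h1 h2 => e1 e2.
have nn : (1 : R) <= n%:R by rewrite ler1n.
have hx : (x1 - x2) * (x1 + x2 - 2 * c) = 0 by nra.
have ne : x1 - x2 != 0 by apply/eqP => e; move: l; rewrite e normr0; lra.
have hs : x1 + x2 - 2 * c = 0.
  by move/eqP: hx; rewrite mulf_eq0 (negbTE ne) /= => /eqP.
have e3 : 4 * r ^+ 2 = (x1 - x2) ^+ 2 + 4.
  rewrite -e1 (_ : x1 - c = (x1 - x2) / 2); last by lra.
  by field.
have sq : (x1 - x2) ^+ 2 = `|x1 - x2| ^+ 2 by rewrite real_normK ?num_real.
rewrite e3 sq; apply/andP; split.
- have : n%:R ^+ 2 <= `|x1 - x2| ^+ 2 by rewrite ler_sqr ?nnegrE ?ler0n //.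
  lra.
- have : `|x1 - x2| ^+ 2 < n.+1%:R ^+ 2 by rewrite ltr_sqr ?nnegrE ?ler0n //.
  lra.
Qed.

Lemma transb g (T : R) : 2 < `|mtr g| -> translen g < T -> mtr g ^+ 2 <= 4 * expR T.
Proof.
rewrite /translen => t2.
set t := mtr g; set u := (`|t| + Num.sqrt (t ^+ 2 - 4)) / 2.
have s0 := sqrtr_ge0 (t ^+ 2 - 4).
have u1 : `|t| / 2 <= u by rewrite /u ler_pM2r //; lra.
have u0 : 0 < u by lra.
move=> hT.
have hu : u < expR (T / 2).
  rewrite -(lnK u0); rewrite ltr_expR; lra.
have : `|t| <= 2 * expR (T / 2) by lra.
have e : expR T = expR (T / 2) ^+ 2 by rewrite expr2 -expRD; congr expR; field.
rewrite e -real_normK ?num_real // => ht.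
have ep := expR_gt0 (T / 2).
have := normr_ge0 t; nra.
Qed.
Lemma data (G : set (mat2 R)) (T : R) (n : nat) (cr : R * R) :
  sl2_subgroup G -> (1 <= n)%N -> n_excursion_lift G T n cr ->
  exists g, [/\ G g, mc g != 0, ma g - md g = 2 * cr.1 * mc g,
    mtr g ^+ 2 - 4 = 4 * mc g ^+ 2 * cr.2 ^+ 2 &
    [/\ n%:R ^+ 2 + 4 <= 4 * cr.2 ^+ 2 < n.+1%:R ^+ 2 + 4,
        mtr g ^+ 2 <= 4 * expR (T + 1) & 0 < cr.2]].
Proof.
move=> sG n1 [r0 ne cl ex].
have [G1 GM GV Gdet] := sG.
have [y [g [Gg hg Lg] <-] ylt] : exists2 y, (@translen R @` axis_of G (geod cr.1 cr.2)) y & y < T + 1.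
  apply: inf_lt; first by case: ne => g ag; exists (@translen R g), g.
  by move: cl; rewrite /closed_geod_length; lra.
have inv : forall z, geod cr.1 cr.2 z -> geod cr.1 cr.2 (mob g z).
  by move=> z Lz; rewrite -Lg; exists z.
have [c0 ad tr] := @axisK g cr.1 cr.2 (Gdet _ Gg) hg r0 inv.
exists g; split => //; split => //.
- exact: (@exc cr.1 cr.2 n n1 ex).
- exact: (@transb g (T+1) hg ylt).
Qed.

End Aux.

Lemma close (R : realType) (x y n : R) : 0 <= x -> 0 <= y -> 1 <= n ->
  n ^+ 2 < x ^+ 2 -> n ^+ 2 < y ^+ 2 -> `|x ^+ 2 - y ^+ 2| < n + 3/4 -> `|x - y| < 1.
Proof.
move=> x0 y0 n1 hx hy; rewrite !ltr_norml => /andP[h1 h2]; apply/andP; split.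
- have xn : n < x by nra.
  have yn : n < y by nra.
  nra.
- have xn : n < x by nra.
  have yn : n < y by nra.
  nra.
Qed.

Lemma int_small (R : realType) (z : int) : `|(z%:~R : R)| < 1 -> z = 0.
Proof.
rewrite -intr_norm -[1](mulr1z) ltr_int => h.
lia.
Qed.

Theorem proposition4p5 (R : realType) (G : set (mat2 R)) :
  sl2_subgroup G -> discrete_group G -> no_elliptic G -> finite_area G ->
  cusp_at_infinity G ->
  exists C : R, 0 < C /\
    forall (n : nat) (T : R), (1 <= n)%N -> 0 < T ->
    forall (k : nat) (f : 'I_k -> R * R),
      (forall i, n_excursion_lift G T n (f i)) ->
      (forall i j, same_excursion G (f i) (f j) -> i = j) ->
      k%:R <= C * expR T / n%:R ^+ 2.
Proof.
move=> sG dG _ _ [GT cuspc].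
have [G1 GM GV Gdet] := sG.
exists (384 * expR 1); split.
  apply: mulr_gt0; [lra | exact: expR_gt0].
move=> n T n1 T0 k f hf hinj.
have [gf hg] := choice (fun i => @data R G T n (f i) sG n1 (hf i)).
have nR : (1 : R) <= n%:R by rewrite ler1n.
have n2 : (0 : R) < n%:R ^+ 2 by rewrite exprn_gt0 //; lra.
have Cpos : 0 <= 384 * expR 1 * expR T / n%:R ^+ 2.
  apply: divr_ge0; last lra.
  apply: mulr_ge0; last exact: expR_ge0.
  apply: mulr_ge0; [lra | exact: expR_ge0].
case: k f hf hinj gf hg => [|k] f hf hinj gf hg; first by rewrite /=.
pose X2 := 4 * expR (T + 1) / n%:R ^+ 2.
have ccb : forall i, 1/16 <= mc (gf i) ^+ 2 /\ mc (gf i) ^+ 2 <= X2.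
  move=> i; have [Gi c0 ad tr [rb trb r0]] := hg i; split.
    have := @shimizu R G sG dG GT _ Gi c0; rewrite -[_ ^+ 2]real_normK ?num_real //.
    have := normr_ge0 (mc (gf i)); nra.
  rewrite /X2 ler_pdivlMr //.
  have := sqr_ge0 (mc (gf i)); nra.
have X2ge : 1/16 <= X2 by have [h1 h2] := ccb ord0; lra.
pose u i := ma (gf i) / mc (gf i).
pose fr i := u i - (Num.floor (u i))%:~R.
have frb : forall i, 0 <= fr i < 1.
  move=> i; have := floor_le (u i); have := floorD1_gt (u i); rewrite intrD /fr.
  move=> h1 h2; apply/andP; split; lra.
pose N := Num.truncn (8 * X2).
pose q i := Num.truncn (8 * X2 * fr i).
have qN : forall i, (q i < N.+1)%N.
  move=> i; rewrite ltnS /q /N; apply: le_truncn.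
  have [h1 h2] := andP (frb i); rewrite -{2}(mulr1 (8 * X2)); apply: ler_wpM2l; lra.
pose v i := mtr (gf i) / mc (gf i).
pose F i := ((inord (q i) : 'I_N.+1), (0 <= v i), (4 * (f i).2 ^+ 2 < (n%:R + 1/2) ^+ 2 + 4)).
have Finj : injective F.
  move=> i j; rewrite /F => -[qe se te].
  have qij : q i = q j by move/(congr1 (@nat_of_ord _)): qe; rewrite !inordK ?qN.
  have [Gi ci0 adi tri [rbi trbi ri0]] := hg i.
  have [Gj cj0 adj trj [rbj trbj rj0]] := hg j.
  have dti := Gdet _ Gi; rewrite /mdet in dti.
  have [fi0 fi1] := andP (frb i); have [fj0 fj1] := andP (frb j).
  have X20 : 0 <= 8 * X2 by lra.
  have dq : `|8 * X2 * fr i - 8 * X2 * fr j| < 1.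
    have xi0 : 0 <= 8 * X2 * fr i by rewrite mulr_ge0.
    have xj0 : 0 <= 8 * X2 * fr j by rewrite mulr_ge0.
    have [a1 a2] := andP (truncn_itv xi0); have [b1 b2] := andP (truncn_itv xj0).
    move: a1 a2 b1 b2; rewrite -/(q i) -/(q j) qij => a1 a2 b1 b2.
    rewrite ltr_norml; apply/andP; split; lra.
  pose l := Num.floor (u i) - Num.floor (u j).
  pose h := mmul (minv (gf i)) (mmul (tp R l) (gf j)).
  have Gh : G h by apply: (GM); [apply: (GV) | apply: (GM) => //; apply: tp_in].
  have mch : mc h = mc (gf i) * mc (gf j) * (fr i - fr j).
    rewrite /h /mmul /minv /tp /= /fr /u /l intrB; field.
    by rewrite ci0 cj0.
  have ccX : `|mc (gf i) * mc (gf j)| <= X2.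
    apply: sq_le; first lra.
    have [c1 c2] := ccb i; have [c3 c4] := ccb j.
    rewrite exprMn; apply: le_trans (_ : X2 * X2 <= _); last by rewrite expr2.
    apply: ler_pM => //; exact: sqr_ge0.
  have mch0 : mc h = 0.
    apply/eqP; apply: contraT => hn.
    have := @shimizu R G sG dG GT _ Gh hn; rewrite mch normrM.
    have : X2 * `|fr i - fr j| < 1 / 8.
      move: dq; rewrite -mulrBr normrM (ger0_norm X20) => dq; lra.
    have := normr_ge0 (fr i - fr j); nra.
  have [e [kk [z [ee hae hbe hde ze]]]] : exists (e kk : R) (z : int),
      [/\ e * e = 1, ma h = e, mb h = kk, md h = e & e * kk - l%:~R = z%:~R].
    have [K [hK|hK]] := cuspc _ Gh mch0.
    - exists 1, K%:~R, (K - l); rewrite hK /=; split => //; first by rewrite mulr1.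
      by rewrite mul1r intrB.
    - exists (-1), K%:~R, (- K - l); rewrite hK /=; split => //; first by rewrite mulrNN mulr1.
      rewrite !intrB intrN mulN1r; ring.
  set ai := ma (gf i); set bi := mb (gf i); set ci := mc (gf i); set di := md (gf i).
  set aj := ma (gf j); set bj := mb (gf j); set cj := mc (gf j); set dj := md (gf j).
  have hYa : aj + l%:~R * cj = ai * ma h + bi * mc h.
    transitivity ((ai * di - bi * ci) * (aj + l%:~R * cj)); first by rewrite dti mul1r.
    rewrite /h /mmul /minv /tp /= -/ai -/bi -/ci -/di -/aj -/bj -/cj -/dj; ring.
  have hYc : cj = ci * ma h + di * mc h.
    transitivity ((ai * di - bi * ci) * cj); first by rewrite dti mul1r.
    rewrite /h /mmul /minv /tp /= -/ai -/bi -/ci -/di -/aj -/bj -/cj -/dj; ring.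
  have hYd : dj = ci * mb h + di * md h.
    transitivity ((ai * di - bi * ci) * dj); first by rewrite dti mul1r.
    rewrite /h /mmul /minv /tp /= -/ai -/bi -/ci -/di -/aj -/bj -/cj -/dj; ring.
  rewrite mch0 hae hbe hde !mulr0 !addr0 in hYa hYc hYd.
  have e0 : e != 0 by apply/eqP => e0; move: ee; rewrite e0 mul0r => /eqP; rewrite eq_sym oner_eq0.
  have cjE : cj = ci * e by [].
  have ajE : aj = ai * e - l%:~R * (ci * e) by rewrite -cjE -hYa; ring.
  have vd : v j - v i = z%:~R.
    rewrite -ze; apply/eqP; rewrite -subr_eq0; apply/eqP.
    transitivity (kk * (1 - e * e) / e); last by rewrite ee subrr mulr0 mul0r.
    rewrite /v /mtr -/ai -/bi -/ci -/di -/aj -/bj -/cj -/dj ajE hYd cjE.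
    by field; rewrite e0 ci0.
  have cc2 : cj ^+ 2 = ci ^+ 2 by rewrite cjE exprMn; rewrite [e ^+ 2]expr2 ee mulr1.
  have vsq : forall x, mc (gf x) != 0 ->
      mtr (gf x) ^+ 2 - 4 = 4 * mc (gf x) ^+ 2 * (f x).2 ^+ 2 ->
      v x ^+ 2 = 4 / mc (gf x) ^+ 2 + 4 * (f x).2 ^+ 2.
    move=> x cx tx; rewrite /v expr_div_n.
    have -> : mtr (gf x) ^+ 2 = 4 + 4 * mc (gf x) ^+ 2 * (f x).2 ^+ 2 by lra.
    by field.
  have vi2 := vsq i ci0 tri; have vj2 := vsq j cj0 trj.
  rewrite -/ci in vi2; rewrite -/cj cc2 in vj2.
  have ci2 : 0 < ci ^+ 2 by rewrite exprn_even_gt0.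
  have p4 : 0 < 4 / ci ^+ 2 by rewrite divr_gt0.
  have A : `|4 * (f i).2 ^+ 2 - 4 * (f j).2 ^+ 2| < n%:R + 3/4.
    have e1 : (n%:R + 1/2) ^+ 2 = n%:R ^+ 2 + n%:R + 1/4 :> R by field.
    have e2 : (n%:R + 1) ^+ 2 = n%:R ^+ 2 + 2 * n%:R + 1 :> R by ring.
    move: te rbi rbj; rewrite -[n.+1]addn1 natrD /= e1 e2.
    case: ltP => a; case: ltP => b // _ /andP[a1 a2] /andP[b1 b2];
      rewrite ltr_norml; apply/andP; split; lra.
  have nvi : n%:R ^+ 2 < v i ^+ 2 by rewrite vi2; lra.
  have nvj : n%:R ^+ 2 < v j ^+ 2 by rewrite vj2; lra.
  have dv : `|v i ^+ 2 - v j ^+ 2| < n%:R + 3/4.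
    by rewrite vi2 vj2 (_ : forall a b c : R, a + b - (a + c) = b - c) //; move=> *; ring.
  have cl : `|v i - v j| < 1.
    case: (boolP (0 <= v i)) => si.
    - have sj : 0 <= v j by rewrite -se.
      exact: close si sj nR nvi nvj dv.
    - have sj : ~~ (0 <= v j) by rewrite -se.
      have ni : 0 <= - v i by rewrite oppr_ge0 ltW // ltNge.
      have nj : 0 <= - v j by rewrite oppr_ge0 ltW // ltNge.
      have := @close R (- v i) (- v j) n%:R ni nj nR; rewrite !sqrrN => /(_ nvi nvj dv).
      by rewrite (_ : - v i - - v j = - (v i - v j)) ?normrN //; ring.
  have z0 : z = 0 by apply: (@int_small R); rewrite -vd -normrN opprB.
  move: ze; rewrite z0 => /eqP; rewrite subr_eq0 => /eqP ekl.
  have kkE : kk = e * l%:~R by rewrite -ekl mulrA ee mul1r.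
  have c1E : (f j).1 = (f i).1 + (- l)%:~R.
    have h2 : 2 * (f j).1 * cj = 2 * ((f i).1 - l%:~R) * cj.
      rewrite -adj -/aj -/dj ajE hYd kkE cjE.
      have -> : 2 * ((f i).1 - l%:~R) * (ci * e) = e * (2 * (f i).1 * ci) - 2 * l%:~R * ci * e by ring.
      rewrite -adi -/ai -/di; ring.
    have : (2 * cj) * ((f j).1 - ((f i).1 - l%:~R)) = 0.
      have -> : (2 * cj) * ((f j).1 - ((f i).1 - l%:~R)) =
        2 * (f j).1 * cj - 2 * ((f i).1 - l%:~R) * cj by ring.
      by rewrite h2 subrr.
    move/eqP; rewrite mulf_eq0 => /orP[/eqP c2|/eqP hh].
    - exfalso; have c3 : cj = 0 by lra.
      by move: cj0; rewrite -/cj c3 eqxx.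
    - by rewrite intrN; lra.
  have r2E : (f j).2 = (f i).2.
    have vij : v j = v i by move: vd; rewrite z0 mulr0z => vd; lra.
    have : 4 * (f j).2 ^+ 2 = 4 * (f i).2 ^+ 2 by move: vi2 vj2; rewrite vij; lra.
    move=> h4; have : ((f j).2 - (f i).2) * ((f j).2 + (f i).2) = 0.
      rewrite -subr_sqr; lra.
    move/eqP; rewrite mulf_eq0 => /orP[/eqP|/eqP]; lra.
  have fjE : f j = ((f i).1 + (- l)%:~R, (f i).2).
    by rewrite (surjective_pairing (f j)) c1E r2E.
  apply: hinj; exists (tp R (- l)); split; first by apply: tp_in.
  by rewrite geod_tp fjE.
have := leq_card F Finj; rewrite card_ord !card_prod card_ord card_bool => hk.
have hkR : (k.+1%:R : R) <= (N.+1 * 2 * 2)%:R by rewrite ler_nat.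
have hN : (N%:R : R) <= 8 * X2 by rewrite truncn_le; lra.
have e : 384 * expR 1 * expR T / n%:R ^+ 2 = 96 * X2.
  by rewrite /X2 expRD; field; lra.
rewrite e; move: hkR; rewrite !natrM -addn1 natrD; lra.
Qed.
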